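(* Let $x,y\in S^1\cap\mathbb{H}^2$ be distinct, with $\{x_*,y_*\}=\{-1,1\}$ labelled so that $x_*,x,y,y_*$ occur in this order on the upper unit semicircle. Suppose the line $L(x,y)$ meets the real axis, at the point $w$, and let $v=L(x,x_* )\cap L(y,y_* )$. Let $S^1(a,r_a)$ be the circle through $x,y$ orthogonal to $S^1$, with $a=i\frac{y(1+|x|^2)-x(1+|y|^2)}{2(x_2y_1-x_1y_2)}$ (where $x=x_1+ix_2$, $y=y_1+iy_2$) and $r_a=\sqrt{|a|^2-1}$. Let $z$ be the point of $S^1\cap S^1(\frac w2,\frac{|w|}{2})$ in $\mathbb{H}^2$, let $n$ be the point of $L(x,y)\cap S^1(\frac w2,\frac{|w|}{2})$ in $\mathbb{H}^2$, let $\{s,t\}=S^1(a,r_a)\cap S^1(\frac w2,\frac{|w|}{2})$, and let $u=L(a)\cap L(x,y)$. Then: (1) $z$ is the hyperbolic midpoint of the hyperbolic segment $J[x,y]$; (2) $n$ is the midpoint of the Euclidean segment $[x,y]$; (3) $v$ lies on the circle $S^1(a,r_a)$; (4) the circle $S^1(a,r_a)$ is orthogonal to the circle $S^1(\frac w2,\frac{|w|}{2})$; (5) $u$ lies on the line $L(s,t)$.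
   Context: $\mathbb{H}^2$ is the upper half plane with boundary the real axis; $S^1$ is the unit circle; $S^1(c,r)$ is the circle with centre $c$ and radius $r$. $L(p,q)$ denotes the line through $p,q$ and $L(p)$ the line through $p$ orthogonal to the real axis. The hyperbolic distance on $\mathbb{H}^2$ satisfies $\cosh\rho(x,y)=1+\frac{|x-y|^2}{2\operatorname{Im}x\operatorname{Im}y}$; $J[x,y]$ is the arc of $S^1$ between $x,y$, and its hyperbolic midpoint is the $z\in J[x,y]$ with $\rho(x,z)=\rho(z,y)$. *)

(* Defs.v *)
From Stdlib Require Import Reals.
From Coquelicot Require Import Coquelicot.
Open Scope R_scope.

Definition inH2 (p : C) : Prop := 0 < Im p.

Definition on_circle (c : C) (r : R) (p : C) : Prop := Cmod (p - c)%C = r.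

Definition on_S1 (p : C) : Prop := on_circle 0%C 1 p.

(* p, q, r are collinear; for p <> q this says r lies on the line L(p,q) *)
Definition on_line (p q r : C) : Prop :=
  Re (q - p)%C * Im (r - p)%C - Im (q - p)%C * Re (r - p)%C = 0.

Definition on_vline (p r : C) : Prop := Re r = Re p.

Definition arcosh (c : R) : R := ln (c + sqrt (c ^ 2 - 1)).

Definition hdist (p q : C) : R :=
  arcosh (1 + (Cmod (p - q)%C) ^ 2 / (2 * Im p * Im q)).

Definition in_J (x y p : C) : Prop :=
  on_S1 p /\ inH2 p /\ Rmin (Re x) (Re y) <= Re p <= Rmax (Re x) (Re y).

Definition hyp_midpoint (x y p : C) : Prop :=
  in_J x y p /\ hdist x p = hdist p y.

Definition orth_circles (c1 : C) (r1 : R) (c2 : C) (r2 : R) : Prop :=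
  (exists p, on_circle c1 r1 p /\ on_circle c2 r2 p) /\
  (forall p, on_circle c1 r1 p -> on_circle c2 r2 p ->
     Re (p - c1)%C * Re (p - c2)%C + Im (p - c1)%C * Im (p - c2)%C = 0).

Definition centre_a (x y : C) : C :=
  (Ci * (y * RtoC (1 + Cmod x ^ 2) - x * RtoC (1 + Cmod y ^ 2))
     / RtoC (2 * (Im x * Re y - Re x * Im y)))%C.

Definition radius_a (x y : C) : R := sqrt (Cmod (centre_a x y) ^ 2 - 1).

(* Main.v *)
Require Import Defs.
From Stdlib Require Import Reals Lra Psatz.
From Coquelicot Require Import Coquelicot.
Open Scope R_scope.

Lemma circ_eq (c : C) (r : R) (P : C) : 0 <= r ->
  (on_circle c r P <-> (fst P - fst c)^2 + (snd P - snd c)^2 = r^2).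
Proof.
  intros Hr. unfold on_circle, Cmod, Cminus, Cplus, Copp. destruct P as [P1 P2], c as [c1 c2]. cbn [fst snd].
  replace (P1 + - c1) with (P1 - c1) by ring. replace (P2 + - c2) with (P2 - c2) by ring.
  split; intro H.
  - rewrite <- H. rewrite pow2_sqrt. reflexivity. apply Rplus_le_le_0_compat; apply pow2_ge_0.
  - rewrite H. rewrite <- (Rabs_pos_eq r Hr) at 2. rewrite <- sqrt_Rsqr_abs. unfold Rsqr. f_equal; ring.
Qed.

Lemma circw (w : R) (P : C) :
  on_circle (RtoC (w/2)) (Rabs w / 2) P <-> fst P ^2 + snd P ^2 = w * fst P.
Proof.
  rewrite circ_eq. 2:{ assert (0 <= Rabs w) by apply Rabs_pos. lra. }
  cbn [fst snd RtoC]. replace ((Rabs w / 2) ^ 2) with ((Rabs w)^2/4) by field. rewrite pow2_abs.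
  split; intro H; nra.
Qed.

Lemma circS1 (P : C) : on_S1 P <-> fst P ^2 + snd P^2 = 1.
Proof.
  unfold on_S1. rewrite circ_eq by lra. cbn [fst snd RtoC]. split; intro H; nra.
Qed.

Lemma circa (A1 A2 r : R) (P : C) :
  on_circle (A1, A2) (Rabs r) P <-> (fst P - A1)^2 + (snd P - A2)^2 = r^2.
Proof.
  rewrite circ_eq by apply Rabs_pos. cbn [fst snd]. rewrite pow2_abs. tauto.
Qed.

Lemma Cmod_sq (c : C) : Cmod c ^ 2 = fst c ^ 2 + snd c ^ 2.
Proof. unfold Cmod. rewrite pow2_sqrt. reflexivity. apply Rplus_le_le_0_compat; apply pow2_ge_0. Qed.

Definition fp (p : R) := (1 - p^2)/(1+p^2).
Definition gp (p : R) := 2*p/(1+p^2).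

Lemma param (x1 x2 : R) : x1^2 + x2^2 = 1 -> 0 < x2 ->
  exists p, 0 < p /\ x1 = fp p /\ x2 = gp p.
Proof.
  intros H1 H2. assert (Hx : -1 < x1) by nra.
  exists (x2/(1+x1)). split.
  { apply Rdiv_lt_0_compat; lra. }
  unfold fp, gp. split.
  - field_simplify_eq. 2:{ split. lra. nra. } nra.
  - field_simplify_eq. 2:{ split. lra. nra. } nra.
Qed.

Lemma fg_unit (p : R) : fp p ^ 2 + gp p ^ 2 = 1.
Proof. unfold fp, gp. field. nra. Qed.

Lemma Cmod_fg (p : R) : Cmod (fp p, gp p) = 1.
Proof. unfold Cmod. cbn [fst snd]. rewrite fg_unit. apply sqrt_1. Qed.

Lemma centre_pq (p q : R) : 0 < p -> 0 < q -> p <> q ->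
  centre_a (fp p, gp p) (fp q, gp q) = ((1-p*q)/(1+p*q), (p+q)/(1+p*q)).
Proof.
  intros Hp Hq Hpq. unfold centre_a. rewrite !Cmod_fg.
  unfold Cdiv, Cmult, Cinv, Cminus, Cplus, Copp, RtoC, Ci, Re, Im. cbn [fst snd].
  unfold fp, gp.
  assert (p - q <> 0) by lra.
  apply injective_projections; cbn [fst snd]; field; repeat split; try nra.
  all: intro E; apply H; assert (E2: (p-q)*(2*(1+p*q)) = 0) by (rewrite <- E; ring);
    apply Rmult_integral in E2; destruct E2 as [E2|E2]; [exact E2 | nra].
Qed.

Lemma between (z a b : R) : 0 <= (z - a) * (b - z) -> Rmin a b <= z <= Rmax a b.
Proof. intro H. unfold Rmin, Rmax. destruct (Rle_dec a b); split; nra. Qed.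

Lemma fac (k E F : R) : k <> 0 -> E = k * F -> E = 0 -> F = 0.
Proof. intros Hk H1 H2. rewrite H2 in H1. symmetry in H1. apply Rmult_integral in H1.
  destruct H1; [contradiction|assumption]. Qed.

Lemma orth_lem (A1 A2 r w P1 P2 : R) : A1 * w = 1 -> A1^2 + A2^2 - r^2 = 1 ->
  (P1 - A1)^2 + (P2 - A2)^2 = r^2 -> P1^2 + P2^2 = w * P1 ->
  (P1 + - A1) * (P1 + - (w/2)) + (P2 + - A2) * (P2 + - 0) = 0.
Proof. intros. nra. Qed.

Lemma radical (A1 A2 r w s1 s2 t1 t2 u1 u2 : R) : A2 <> 0 -> A1^2 + A2^2 - r^2 = 1 ->
  (s1 - A1)^2 + (s2 - A2)^2 = r^2 -> s1^2 + s2^2 = w * s1 ->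
  (t1 - A1)^2 + (t2 - A2)^2 = r^2 -> t1^2 + t2^2 = w * t1 ->
  u1 * (w - 2*A1) - 2*A2*u2 + 1 = 0 ->
  (t1 - s1) * (u2 - s2) - (t2 - s2) * (u1 - s1) = 0.
Proof.
  intros HA HF Hs1 Hs2 Ht1 Ht2 Hu.
  assert (Fs : s1 * (w - 2*A1) - 2*A2*s2 + 1 = 0) by nra.
  assert (Ft : t1 * (w - 2*A1) - 2*A2*t2 + 1 = 0) by nra.
  set (N1 := w - 2*A1). set (N2 := -2*A2).
  assert (HN : N2 <> 0) by (unfold N2; lra).
  apply (fac N2 (N2 * ((t1 - s1) * (u2 - s2) - (t2 - s2) * (u1 - s1)))); [exact HN | reflexivity |].
  assert (B : (t1-u1)*N1 + (t2-u2)*N2 = 0) by (unfold N1, N2 in *; lra).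
  assert (B' : (s1-u1)*N1 + (s2-u2)*N2 = 0) by (unfold N1, N2 in *; lra).
  replace (N2 * ((t1 - s1) * (u2 - s2) - (t2 - s2) * (u1 - s1)))
    with ((s1-u1) * ((t1-u1)*N1 + (t2-u2)*N2) - (t1-u1) * ((s1-u1)*N1 + (s2-u2)*N2)) by ring.
  rewrite B, B'. ring.
Qed.

Lemma line_pq (p q n1 n2 : R) : 0 < p -> 0 < q -> p <> q ->
  on_line (fp p, gp p) (fp q, gp q) (n1, n2) ->
  n2 = gp p + (p*q - 1)/(p+q) * (n1 - fp p).
Proof.
  intros Hp Hq Hpq H. unfold on_line, Cminus, Cplus, Copp, Re, Im in H. cbn [fst snd] in H.
  assert (Hd : fp q - fp p <> 0).
  { unfold fp. intro E. apply Hpq.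
    assert (E2 : (p - q) * (2*(p+q)) = 0).
    { replace ((p - q) * (2*(p+q))) with ((fp q - fp p) * ((1+p^2)*(1+q^2))) by (unfold fp; field; nra).
      unfold fp. rewrite E. ring. }
    apply Rmult_integral in E2. destruct E2; lra. }
  assert (H0 : n2 - (gp p + (p*q - 1)/(p+q) * (n1 - fp p)) = 0).
  { eapply (fac (fp q - fp p)). exact Hd. 2: exact H. unfold fp, gp. field. repeat split; nra. }
  lra.
Qed.

Theorem proposition3p7 (x y xs ys : C) (w : R) :
  on_S1 x -> inH2 x -> on_S1 y -> inH2 y -> x <> y ->
  ((xs = RtoC (-1) /\ ys = RtoC 1 /\ Re x < Re y) \/
   (xs = RtoC 1 /\ ys = RtoC (-1) /\ Re y < Re x)) ->
  on_line x y (RtoC w) ->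
  let a := centre_a x y in
  let ra := radius_a x y in
  let cw := RtoC (w / 2) in
  let rw := Rabs w / 2 in
  (forall z, on_S1 z -> on_circle cw rw z -> inH2 z -> hyp_midpoint x y z) /\
  (forall n, on_line x y n -> on_circle cw rw n -> inH2 n ->
     n = ((x + y) / 2)%C) /\
  (forall v, on_line x xs v -> on_line y ys v -> on_circle a ra v) /\
  orth_circles a ra cw rw /\
  (forall s t u, s <> t ->
     on_circle a ra s -> on_circle cw rw s ->
     on_circle a ra t -> on_circle cw rw t ->
     on_vline a u -> on_line x y u ->
     on_line s t u).
Proof.
  intros Hx Hx2 Hy Hy2 Hne Hcase Hw a ra cw rw.
  destruct x as [x1 x2], y as [y1 y2].
  apply circS1 in Hx, Hy. unfold inH2 in Hx2, Hy2. cbn [fst snd Im] in *.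
  destruct (param x1 x2 Hx Hx2) as [p [Hp [E1 E2]]].
  destruct (param y1 y2 Hy Hy2) as [q [Hq [E3 E4]]].
  subst x1 x2 y1 y2.
  assert (Hpq : p <> q) by (intro E; subst q; apply Hne; reflexivity).
  assert (Hpq' : p - q <> 0) by lra.
  assert (Ew : (1 - p*q) * w - (1 + p*q) = 0).
  { unfold on_line, Cminus, Cplus, Copp, RtoC, Re, Im in Hw. cbn [fst snd] in Hw.
    eapply (fac (2*(p-q)/((1+p^2)*(1+q^2)))). 3: exact Hw.
    - unfold Rdiv. apply Rmult_integral_contrapositive_currified. lra. apply Rinv_neq_0_compat. nra.
    - unfold fp, gp. field. nra. }
  assert (Hpq1 : 1 - p*q <> 0) by (intro E; replace (1 - p*q) with 0 in Ew by lra; nra).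
  assert (Ew' : w = (1+p*q)/(1-p*q)) by (field_simplify_eq; [lra | exact Hpq1]).
  clear Ew Hw. subst w.
  assert (Ea : a = ((1-p*q)/(1+p*q), (p+q)/(1+p*q))) by (apply centre_pq; assumption).
  assert (Era : ra = Rabs ((p-q)/(1+p*q))).
  { unfold ra, radius_a. fold a. rewrite Ea, Cmod_sq. cbn [fst snd].
    rewrite <- sqrt_Rsqr_abs. unfold Rsqr. f_equal. field. nra. }
  clearbody a ra. subst a ra. unfold cw, rw. clear cw rw.
  assert (Hpq0 : 0 < 1 + p*q) by nra.
  set (W := (1 + p*q)/(1 - p*q)).
  assert (HWa : W * ((1-p*q)/(1+p*q)) = 1) by (unfold W; field; lra).
  split.
  { intros [z1 z2] Hz Hzc Hzh. apply circS1 in Hz; rewrite circw in Hzc; cbn [fst snd] in *.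
    unfold inH2 in Hzh; cbn [Im snd] in Hzh.
    assert (HWz : W * z1 = 1) by lra.
    assert (Ez : z1 = (1-p*q)/(1+p*q)).
    { replace z1 with ((W*z1) * ((1-p*q)/(1+p*q))) by (unfold W; field; lra). rewrite HWz. ring. }
    unfold hyp_midpoint, in_J. split; [split; [|split]|].
    - apply circS1; cbn [fst snd]; exact Hz.
    - unfold inH2; cbn [Im snd]; exact Hzh.
    - cbn [Re fst]. apply between. rewrite Ez.
      replace ((_ - _) * (_ - _)) with (4*p*q*(p-q)^2/((1+p*q)^2*(1+p^2)*(1+q^2)))
        by (unfold fp; field; repeat split; nra).
      unfold Rdiv. apply Rmult_le_pos. 
      + assert (0 <= (p-q)^2) by apply pow2_ge_0. assert (0 <= 4*p*q) by nra. nra.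
      + left. apply Rinv_0_lt_compat. repeat apply Rmult_lt_0_compat; nra.
    - unfold hdist. f_equal. rewrite !Cmod_sq. unfold Cminus, Cplus, Copp; cbn [fst snd Im].
      replace ((fp p + - z1)^2 + (gp p + - z2)^2) with (2 - 2*(fp p * z1 + gp p * z2)) by nra.
      replace ((z1 + - fp q)^2 + (z2 + - gp q)^2) with (2 - 2*(fp q * z1 + gp q * z2)) by nra.
      rewrite Ez. unfold fp, gp. field. repeat split; nra. }
  split.
  { intros [n1 n2] Hl Hc Hh. apply line_pq in Hl; try assumption. rewrite circw in Hc.
    unfold inH2 in Hh. cbn [fst snd Im] in *. subst n2.
    set (k := (p*q - 1)/(p+q)) in *.
    assert (Q : (n1 - (fp p + fp q)/2) * (n1 - W) = 0).
    { apply (fac (1 + k^2) (n1^2 + (gp p + k*(n1 - fp p))^2 - W*n1)).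
      - assert (0 <= k^2) by apply pow2_ge_0. lra.
      - unfold k, W, fp, gp. field. repeat split; nra.
      - lra. }
    apply Rmult_integral in Q. destruct Q as [Q|Q].
    - assert (En : n1 = (fp p + fp q)/2) by lra. subst n1.
      unfold Cdiv, Cmult, Cinv, Cplus, RtoC. apply injective_projections; cbn [fst snd].
      + field.
      + unfold k, fp, gp. field. repeat split; nra.
    - exfalso. assert (En : n1 = W) by lra. subst n1.
      assert (E0 : gp p + k * (W - fp p) = 0) by (unfold k, W, fp, gp; field; repeat split; nra).
      lra. }
  split.
  { intros [v1 v2] H1 H2. rewrite circa. cbn [fst snd].
    destruct Hcase as [[-> [-> _]] | [-> [-> _]]];
      unfold on_line, Cminus, Cplus, Copp, RtoC, Re, Im in H1, H2; cbn [fst snd] in H1, H2.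
    - assert (L1 : v2 - p*(v1+1) = 0).
      { eapply (fac (-2/(1+p^2))). 3: exact H1. 
        - unfold Rdiv. apply Rmult_integral_contrapositive_currified. lra. apply Rinv_neq_0_compat. nra.
        - unfold fp, gp. field. nra. }
      assert (L2 : q*v2 + v1 - 1 = 0).
      { eapply (fac (2*q/(1+q^2))). 3: exact H2. 
        - unfold Rdiv. apply Rmult_integral_contrapositive_currified. lra. apply Rinv_neq_0_compat. nra.
        - unfold fp, gp. field. nra. }
      assert (Ev1 : v1 = (1-p*q)/(1+p*q)).
      { replace v1 with ((v1*(1+p*q))/(1+p*q)) by (field; lra).
        replace (v1*(1+p*q)) with (1-p*q) by nra. reflexivity. }
      assert (Ev2 : v2 = p*(v1+1)) by lra. rewrite Ev2, Ev1. field. lra.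
    - assert (L1 : p*v2 + v1 - 1 = 0).
      { eapply (fac (2*p/(1+p^2))). 3: exact H1. 
        - unfold Rdiv. apply Rmult_integral_contrapositive_currified. lra. apply Rinv_neq_0_compat. nra.
        - unfold fp, gp. field. nra. }
      assert (L2 : v2 - q*(v1+1) = 0).
      { eapply (fac (-2/(1+q^2))). 3: exact H2. 
        - unfold Rdiv. apply Rmult_integral_contrapositive_currified. lra. apply Rinv_neq_0_compat. nra.
        - unfold fp, gp. field. nra. }
      assert (Ev1 : v1 = (1-p*q)/(1+p*q)).
      { replace v1 with ((v1*(1+p*q))/(1+p*q)) by (field; lra).
        replace (v1*(1+p*q)) with (1-p*q) by nra. reflexivity. }
      assert (Ev2 : v2 = q*(v1+1)) by lra. rewrite Ev2, Ev1. field. lra. }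
  assert (HF : ((1-p*q)/(1+p*q))^2 + ((p+q)/(1+p*q))^2 - ((p-q)/(1+p*q))^2 = 1)
    by (field; lra).
  assert (HAW : (1-p*q)/(1+p*q) * W = 1) by (rewrite Rmult_comm; exact HWa).
  split.
  { split.
    - assert (HDn : 0 < (1-p*q)^2 + 4*p^2) by (assert (0 <= (1-p*q)^2) by apply pow2_ge_0; nra).
      exists ((1+p*q)*(1-p*q)/((1-p*q)^2 + 4*p^2), (1+p*q)*(2*p)/((1-p*q)^2 + 4*p^2)).
      split.
      + rewrite circa. cbn [fst snd]. field. lra.
      + rewrite circw. cbn [fst snd]. unfold W. field. lra.
    - intros [P1 P2] H1 H2. rewrite circa in H1. rewrite circw in H2. cbn [fst snd] in H1, H2.
      unfold Cminus, Cplus, Copp, RtoC, Re, Im. cbn [fst snd].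
      apply (orth_lem _ _ ((p-q)/(1+p*q))); assumption. }
  intros [s1 s2] [t1 t2] [u1 u2] _ Hs1 Hs2 Ht1 Ht2 Hu1 Hu2.
  rewrite circa in Hs1, Ht1. rewrite circw in Hs2, Ht2.
  unfold on_vline, Re in Hu1. apply line_pq in Hu2; try assumption.
  cbn [fst snd] in *.
  unfold on_line, Cminus, Cplus, Copp, Re, Im. cbn [fst snd].
  apply (radical ((1-p*q)/(1+p*q)) ((p+q)/(1+p*q)) ((p-q)/(1+p*q)) W); try assumption.
  - intro E. assert (E2 : p + q = 0).
    { replace (p+q) with ((p+q)/(1+p*q) * (1+p*q)) by (field; lra). rewrite E. ring. }
    lra.
  - rewrite Hu2, Hu1. unfold W, fp, gp. field. repeat split; nra.
Qed.
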